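(* Let $X,Y$ be metric spaces, $U\subset X$ and $V\subset Y$ open sets, and $\Psi:X\times X\rightrightarrows Y$ a set-valued mapping with closed graph, where either $X$ or $\operatorname{gr}\Psi$ is complete. Set $F(x)=\Psi(x,x)$. Let $0\le\ell<r$ and assume: (a) for every $u\in U$, every $x\in U$, every $v\in\Psi(x,u)$, every $t$ with $0<t<m(x)$ and every $y\in V$ with $d(y,v)<rt$, there is $x'$ with $d(x,x')\le r^{-1}d(y,v)$ and $y\in\Psi(x',u)$; (b) for every $x\in U$ and all $u,w\in U$: $\sup\{d(z,\Psi(x,w)) : z\in\Psi(x,u)\cap V\}\le \ell\,d(u,w)$. Then $F$ is Milyutin regular on $U\times V$ with $\operatorname{sur}_mF(U|V)\ge r-\ell$.
   Context: $m(x)=d(x,X\setminus U)$ ($d(x,\emptyset)=+\infty$). $B(A,s)=\{y:\exists a\in A,\ d(y,a)\le s\}$. $F$ is Milyutin regular on $U\times V$ if there is $r>0$ with $B(F(x),rt)\cap V\subset F(B(x,t))$ for all $x\in U$, $0\le t<m(x)$; $\operatorname{sur}_mF(U|V)$ is the supremum of such $r$ ($0$ if none). *)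

(* Defs.v *)
From Stdlib Require Import Reals.
Open Scope R_scope.

Definition is_metric {X : Type} (d : X -> X -> R) : Prop :=
  (forall x y, 0 <= d x y) /\
  (forall x y, d x y = 0 <-> x = y) /\
  (forall x y, d x y = d y x) /\
  (forall x y z, d x z <= d x y + d y z).

Definition seq_conv {X : Type} (d : X -> X -> R) (s : nat -> X) (l : X) : Prop :=
  forall eps, 0 < eps -> exists N, forall n, (N <= n)%nat -> d (s n) l < eps.

Definition seq_cauchy {X : Type} (d : X -> X -> R) (s : nat -> X) : Prop :=
  forall eps, 0 < eps -> exists N, forall n m, (N <= n)%nat -> (N <= m)%nat ->
    d (s n) (s m) < eps.

Definition complete {X : Type} (d : X -> X -> R) : Prop :=
  forall s, seq_cauchy d s -> exists l, seq_conv d s l.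

Definition is_open {X : Type} (d : X -> X -> R) (U : X -> Prop) : Prop :=
  forall x, U x -> exists e, 0 < e /\ forall y, d x y < e -> U y.

(** Set-valued mapping Psi : X x X ==> Y, represented by its graph relation
    [Psi x u y] meaning y \in Psi(x,u). *)

(** Closed graph (in the product metric space X x X x Y; closedness is
    sequential closedness, which is closedness in a metric space). *)
Definition closed_graph2 {X Y : Type} (dX : X -> X -> R) (dY : Y -> Y -> R)
  (Psi : X -> X -> Y -> Prop) : Prop :=
  forall (xs us : nat -> X) (ys : nat -> Y) x u y,
    (forall n, Psi (xs n) (us n) (ys n)) ->
    seq_conv dX xs x -> seq_conv dX us u -> seq_conv dY ys y ->
    Psi x u y.

(** The graph of Psi, as a metric subspace of X x X x Y (product metric),
    is complete: every Cauchy sequence of graph points converges to a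
    graph point. *)
Definition complete_graph2 {X Y : Type} (dX : X -> X -> R) (dY : Y -> Y -> R)
  (Psi : X -> X -> Y -> Prop) : Prop :=
  forall (xs us : nat -> X) (ys : nat -> Y),
    (forall n, Psi (xs n) (us n) (ys n)) ->
    seq_cauchy dX xs -> seq_cauchy dX us -> seq_cauchy dY ys ->
    exists x u y, Psi x u y /\
      seq_conv dX xs x /\ seq_conv dX us u /\ seq_conv dY ys y.

(** [lt_m d U x t] : t < m(x) where m(x) = d(x, X \ U) = inf {d(x,y) : y \notin U}
    (with inf of the empty set = +infinity).  Unfolded: t < inf S iff some
    s > t is a lower bound of S. *)
Definition lt_m {X : Type} (d : X -> X -> R) (U : X -> Prop) (x : X) (t : R) : Prop :=
  exists s, t < s /\ forall y, ~ U y -> s <= d x y.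

(** [dist_set_le d A z c] : d(z, A) <= c, where d(z,A) = inf {d(z,a) : a \in A}
    (= +infinity if A is empty).  Unfolded: inf S <= c iff for every eps > 0
    some element of S is < c + eps. *)
Definition dist_set_le {Y : Type} (d : Y -> Y -> R) (A : Y -> Prop) (z : Y) (c : R) : Prop :=
  forall eps, 0 < eps -> exists a, A a /\ d z a < c + eps.

Definition milyutin_with {X Y : Type} (dX : X -> X -> R) (dY : Y -> Y -> R)
  (F : X -> Y -> Prop) (U : X -> Prop) (V : Y -> Prop) (r : R) : Prop :=
  0 < r /\
  forall x t, U x -> 0 <= t -> lt_m dX U x t ->
    forall y, (exists v, F x v /\ dY y v <= r * t) -> V y ->
      exists x', dX x x' <= t /\ F x' y.

Definition milyutin_regular {X Y : Type} (dX : X -> X -> R) (dY : Y -> Y -> R)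
  (F : X -> Y -> Prop) (U : X -> Prop) (V : Y -> Prop) : Prop :=
  exists r, milyutin_with dX dY F U V r.

(** [sur_m_ge ... c] : sur_m F(U|V) >= c, where sur_m F(U|V) is the supremum
    of the admissible moduli r (0 if there is none).  Unfolded: sup S >= c
    (with sup of empty = 0) iff c <= 0 or every c' < c is exceeded by some
    element of S. *)
Definition sur_m_ge {X Y : Type} (dX : X -> X -> R) (dY : Y -> Y -> R)
  (F : X -> Y -> Prop) (U : X -> Prop) (V : Y -> Prop) (c : R) : Prop :=
  c <= 0 \/
  forall c', c' < c -> exists r, c' < r /\ milyutin_with dX dY F U V r.

(* Main.v *)
Require Import Defs.
From Stdlib Require Import Reals Lra Lia ClassicalEpsilon.
Open Scope R_scope.


Lemma build_seq {T : Type} (P : nat -> T -> Prop) (Q : nat -> T -> T -> Prop) (p0 : T) :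
  P 0%nat p0 -> (forall n p, P n p -> exists p', Q n p p' /\ P (S n) p') ->
  exists s : nat -> T, s 0%nat = p0 /\ forall n, P n (s n) /\ Q n (s n) (s (S n)).
Proof.
  intros H0 Hs.
  assert (Hex : forall n p, exists p', P n p -> Q n p p' /\ P (S n) p').
  { intros n p. destruct (classic (P n p)) as [H|H].
    - destruct (Hs n p H) as [p' Hp']. exists p'. auto.
    - exists p. intro; contradiction. }
  pose (g := fun n p => proj1_sig (constructive_indefinite_description _ (Hex n p))).
  assert (Hg : forall n p, P n p -> Q n p (g n p) /\ P (S n) (g n p)).
  { intros n p. exact (proj2_sig (constructive_indefinite_description _ (Hex n p))). }
  exists (nat_rect (fun _ => T) p0 (fun n p => g n p)). split; [reflexivity|].
  assert (HP : forall n, P n (nat_rect (fun _ => T) p0 (fun n p => g n p) n)).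
  { induction n; simpl; auto. apply Hg; auto. }
  intro n. split; auto. simpl. apply Hg; auto.
Qed.

Lemma conv_unique {X} (d : X -> X -> R) (HX : is_metric d) s a b :
  seq_conv d s a -> seq_conv d s b -> a = b.
Proof.
  destruct HX as [Hp [H0 [Hs Ht]]]. intros Ha Hb.
  apply H0. destruct (Hp a b) as [Hlt|Heq]; [|auto].
  exfalso.
  destruct (Ha (d a b / 2)) as [N1 HN1]; [lra|].
  destruct (Hb (d a b / 2)) as [N2 HN2]; [lra|].
  specialize (HN1 (max N1 N2) (Nat.le_max_l _ _)). specialize (HN2 (max N1 N2) (Nat.le_max_r _ _)).
  pose proof (Ht a (s (max N1 N2)) b). rewrite (Hs a (s (max N1 N2))) in H. lra.
Qed.

Lemma conv_shift {X} (d : X -> X -> R) s a :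
  seq_conv d s a -> seq_conv d (fun n => s (S n)) a.
Proof.
  intros H eps He. destruct (H eps He) as [N HN]. exists N. intros n Hn. apply HN. lia.
Qed.

Lemma cauchy_shift {X} (d : X -> X -> R) s :
  seq_cauchy d s -> seq_cauchy d (fun n => s (S n)).
Proof.
  intros H eps He. destruct (H eps He) as [N HN]. exists N. intros n m Hn Hm. apply HN; lia.
Qed.

Lemma conv_const {X} (d : X -> X -> R) (HX : is_metric d) y :
  seq_conv d (fun _ => y) y.
Proof.
  destruct HX as [Hp [H0 _]]. intros eps He. exists 0%nat. intros. 
  replace (d y y) with 0 by (symmetry; apply H0; auto). auto.
Qed.

Lemma cauchy_const {X} (d : X -> X -> R) (HX : is_metric d) y :
  seq_cauchy d (fun _ => y).
Proof.
  destruct HX as [Hp [H0 _]]. intros eps He. exists 0%nat. intros. 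
  replace (d y y) with 0 by (symmetry; apply H0; auto). auto.
Qed.

Lemma geom_cauchy {X} (d : X -> X -> R) (HX : is_metric d) (xs : nat -> X) B rho :
  0 <= B -> 0 <= rho -> rho < 1 ->
  (forall n, d (xs n) (xs (S n)) <= B * (1 - rho) * rho ^ n) -> seq_cauchy d xs.
Proof.
  intros HB Hr0 Hr1 Hst.
  pose proof HX as [Hp [H0 [Hs Ht]]].
  assert (Hj : forall n j, d (xs n) (xs (n + j)%nat) <= B * rho ^ n * (1 - rho ^ j)).
  { intros n j. induction j.
    - rewrite Nat.add_0_r. replace (d (xs n) (xs n)) with 0 by (symmetry; apply H0; auto).
      simpl. lra.
    - rewrite Nat.add_succ_r. pose proof (Ht (xs n) (xs (n+j)%nat) (xs (S (n+j)))).
      pose proof (Hst (n+j)%nat). rewrite pow_add in H1.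
      replace (rho ^ S j) with (rho * rho ^ j) by reflexivity.
      assert (E : B * rho ^ n * (1 - rho ^ j) + B * (1 - rho) * (rho ^ n * rho ^ j)
                  = B * rho ^ n * (1 - rho * rho ^ j)) by ring.
      lra. }
  assert (Hb : forall n j, d (xs n) (xs (n + j)%nat) <= B * rho ^ n).
  { intros n j. pose proof (Hj n j). pose proof (pow_le rho n Hr0).
    pose proof (pow_le rho j Hr0). assert (0 <= B * rho ^ n) by (apply Rmult_le_pos; auto).
    nra. }
  intros eps He.
  destruct (pow_lt_1_zero rho ltac:(rewrite Rabs_right; lra) (eps / (B + 1)))
    as [N HN].
  { apply Rdiv_lt_0_compat; lra. }
  exists N.
  assert (Hk : forall n m, (N <= n)%nat -> (n <= m)%nat -> d (xs n) (xs m) < eps).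
  { intros n m Hn Hnm. replace m with (n + (m - n))%nat by lia.
    pose proof (Hb n (m - n)%nat). specialize (HN n Hn).
    pose proof (pow_le rho n Hr0). rewrite Rabs_right in HN by lra.
    assert ((B + 1) * rho ^ n < (B + 1) * (eps / (B + 1))).
    { apply Rmult_lt_compat_l; lra. }
    replace ((B + 1) * (eps / (B + 1))) with eps in H2 by (field; lra).
    nra. }
  intros n m Hn Hm. destruct (Nat.le_ge_cases n m).
  - apply Hk; auto.
  - rewrite Hs. apply Hk; auto.
Qed.

Lemma le_of_conv {X} (d : X -> X -> R) (HX : is_metric d) xs x x0 B :
  seq_conv d xs x -> (forall n, d x0 (xs n) <= B) -> d x0 x <= B.
Proof.
  destruct HX as [Hp [H0 [Hs Ht]]]. intros Hc Hb.
  destruct (Rle_or_lt (d x0 x) B) as [H|H]; auto. exfalso.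
  destruct (Hc (d x0 x - B)) as [N HN]; [lra|].
  specialize (HN N (le_n N)). pose proof (Hb N). pose proof (Ht x0 (xs N) x). lra.
Qed.
Lemma core
  (X Y : Type) (dX : X -> X -> R) (dY : Y -> Y -> R)
  (HX : is_metric dX) (HY : is_metric dY)
  (U : X -> Prop) (V : Y -> Prop)
  (Psi : X -> X -> Y -> Prop)
  (Hclosed : closed_graph2 dX dY Psi)
  (Hcomplete : complete dX \/ complete_graph2 dX dY Psi)
  (l r : R) (Hl : 0 <= l) (Hlr : l < r)
  (Ha : forall u x v t y, U u -> U x -> Psi x u v ->
          0 < t -> lt_m dX U x t -> V y -> dY y v < r * t ->
          exists x', dX x x' <= / r * dY y v /\ Psi x' u y)
  (Hb : forall x u w, U x -> U u -> U w ->
          forall z, Psi x u z -> V z -> dist_set_le dY (Psi x w) z (l * dX u w))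
  k (hk0 : 0 < k) (hk : k < r - l) x0 t (HUx : U x0) (ht : 0 < t)
  (hm : lt_m dX U x0 t) y v (Hv : Psi x0 x0 v) (Hyv : dY y v <= k * t) (Vy : V y) :
  exists x', dX x0 x' <= t /\ Psi x' x' y.
Proof.
  pose proof HX as [dXp [dX0 [dXs dXt]]].
  pose proof HY as [dYp [dY0 [dYs dYt]]].
  destruct hm as [s [hts hs]].
  set (K := (r - l + k) / 2).
  set (rho := 1 - K / r).
  set (A := dY y v + (K - k) * t).
  set (B := A / K).
  assert (Hr : 0 < r) by lra.
  assert (HK1 : k < K) by (unfold K; lra).
  assert (HK2 : K < r - l) by (unfold K; lra).
  assert (HA : 0 < A) by (unfold A; pose proof (dYp y v); nra).
  assert (HBK : B * K = A) by (unfold B; field; lra).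
  assert (HB0 : 0 <= B) by nra.
  assert (HBt : B <= t) by (unfold A in HBK; nra).
  assert (Hrho : rho * r = r - K) by (unfold rho; field; lra).
  assert (Hrho0 : 0 < rho) by nra.
  assert (Hrho1 : rho < 1) by nra.
  assert (HAr : / r * A = B * (1 - rho)).
  { rewrite <- HBK. apply Rmult_eq_reg_l with r; [|lra].
    replace (r * (B * (1 - rho))) with (B * (r - rho * r)) by ring.
    rewrite Hrho. field. lra. }
  assert (Hir : 0 < / r) by (apply Rinv_0_lt_compat; lra).
  set (P := fun n (p : X * Y) => Psi (fst p) (fst p) (snd p) /\
              dX x0 (fst p) <= B * (1 - rho ^ n) /\ dY y (snd p) <= A * rho ^ n).
  set (Q := fun n (p p' : X * Y) => dX (fst p) (fst p') <= B * (1 - rho) * rho ^ n /\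
              Psi (fst p') (fst p) y).
  assert (step : forall n p, P n p -> exists p', Q n p p' /\ P (S n) p').
  { intros n [xn vn] [H1 [H2 H3]]; simpl in *.
    set (pn := rho ^ n) in *.
    assert (Hpn : 0 < pn) by (apply pow_lt; auto).
    assert (Hw : / r * dY y vn <= B * (1 - rho) * pn).
    { rewrite <- HAr. rewrite Rmult_assoc. apply Rmult_le_compat_l; lra. }
    assert (Hw0 : 0 <= / r * dY y vn) by (pose proof (dYp y vn); nra).
    assert (Hbd : B * (1 - pn) + B * (1 - rho) * pn <= B) by nra.
    assert (Hdn : dX x0 xn + / r * dY y vn < s) by lra.
    assert (HUn : U xn).
    { destruct (classic (U xn)) as [Hu|Hu]; auto. specialize (hs xn Hu). lra. }
    set (w := / r * dY y vn) in *.
    assert (Hrw : r * w = dY y vn) by (unfold w; field; lra).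
    set (tn := (w + (s - dX x0 xn)) / 2).
    destruct (Ha xn xn vn tn y HUn HUn H1) as [x' [Hx'1 Hx'2]].
    { unfold tn; lra. }
    { exists (s - dX x0 xn). split; [unfold tn; lra|].
      intros z Hz. specialize (hs z Hz). pose proof (dXt x0 xn z). lra. }
    { auto. }
    { unfold tn. rewrite <- Hrw. nra. }
    fold w in Hx'1.
    assert (Hd' : dX x0 x' <= B * (1 - rho * pn)).
    { pose proof (dXt x0 xn x'). nra. }
    assert (HUx' : U x').
    { destruct (classic (U x')) as [Hu|Hu]; auto. specialize (hs x' Hu).
      pose proof (dXt x0 xn x'). lra. }
    destruct (Hb x' xn x' HUx' HUn HUx' y Hx'2 Vy ((rho * r - l) * / r * A * pn))
      as [v' [Hv'1 Hv'2]].
    { assert (0 < rho * r - l) by lra.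
      repeat apply Rmult_lt_0_compat; auto. }
    exists (x', v'). unfold Q, P; simpl; fold pn. split; [split; [lra|auto]|].
    split; [auto|]. split; [lra|].
    assert (l * dX xn x' <= l * (B * (1 - rho) * pn)).
    { apply Rmult_le_compat_l; lra. }
    assert (E : l * (B * (1 - rho) * pn) + (rho * r - l) * / r * A * pn = A * (rho * pn)).
    { rewrite <- HAr. field. lra. }
    lra. }
  destruct (build_seq P Q (x0, v)) as [sq [Hs0 Hsq]].
  { unfold P; simpl. split; auto. split.
    - replace (dX x0 x0) with 0 by (symmetry; apply dX0; auto). lra.
    - unfold A. pose proof (dYp y v). nra. }
  { intros n p Hp. exact (step n p Hp). }
  set (xs := fun n => fst (sq n)).
  assert (Hc : seq_cauchy dX xs).
  { apply (geom_cauchy dX HX xs B rho); auto; try lra.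
    intro n. destruct (Hsq n) as [_ [Hq _]]. exact Hq. }
  assert (Hin : forall n, Psi (xs (S n)) (xs n) y).
  { intro n. destruct (Hsq n) as [_ [_ Hq]]. exact Hq. }
  assert (Hdist : forall n, dX x0 (xs n) <= B).
  { intro n. destruct (Hsq n) as [[_ [Hd _]] _]. pose proof (pow_le rho n (Rlt_le _ _ Hrho0)).
    fold xs in Hd. unfold xs in *; nra. }
  assert (Hfin : forall xl, seq_conv dX xs xl -> Psi xl xl y -> exists x', dX x0 x' <= t /\ Psi x' x' y).
  { intros xl Hxl Hp. exists xl. split; auto.
    pose proof (le_of_conv dX HX xs xl x0 B Hxl Hdist). lra. }
  destruct Hcomplete as [HXc | HGc].
  - destruct (HXc xs Hc) as [xl Hxl]. apply (Hfin xl Hxl).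
    apply (Hclosed (fun n => xs (S n)) xs (fun _ => y)); auto.
    + apply conv_shift; auto.
    + apply conv_const; auto.
  - destruct (HGc (fun n => xs (S n)) xs (fun _ => y) Hin (cauchy_shift _ _ Hc) Hc
      (cauchy_const dY HY y)) as [xa [ua [ya [Hp [H1 [H2 H3]]]]]].
    assert (ya = y) by (apply (conv_unique dY HY (fun _ => y)); auto; apply conv_const; auto).
    subst ya.
    assert (xa = ua) by (apply (conv_unique dX HX (fun n => xs (S n))); auto; apply conv_shift; auto).
    subst xa. apply (Hfin ua H2 Hp).
Qed.

Theorem mainTheorem3
  (X Y : Type) (dX : X -> X -> R) (dY : Y -> Y -> R)
  (HX : is_metric dX) (HY : is_metric dY)
  (U : X -> Prop) (V : Y -> Prop)
  (HU : is_open dX U) (HV : is_open dY V)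
  (Psi : X -> X -> Y -> Prop)
  (Hclosed : closed_graph2 dX dY Psi)
  (Hcomplete : complete dX \/ complete_graph2 dX dY Psi)
  (l r : R) (Hl : 0 <= l) (Hlr : l < r)
  (Ha : forall u x v t y, U u -> U x -> Psi x u v ->
          0 < t -> lt_m dX U x t -> V y -> dY y v < r * t ->
          exists x', dX x x' <= / r * dY y v /\ Psi x' u y)
  (Hb : forall x u w, U x -> U u -> U w ->
          forall z, Psi x u z -> V z -> dist_set_le dY (Psi x w) z (l * dX u w)) :
  milyutin_regular dX dY (fun x => Psi x x) U V /\
  sur_m_ge dX dY (fun x => Psi x x) U V (r - l).
Proof.
  assert (Hk : forall k, 0 < k -> k < r - l -> milyutin_with dX dY (fun x => Psi x x) U V k).
  { intros k hk0 hk. split; auto.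
    intros x t Ux ht0 hm y [v [Hv Hyv]] Vy.
    destruct (Rle_lt_or_eq_dec 0 t ht0) as [htp|hte].
    - exact (core X Y dX dY HX HY U V Psi Hclosed Hcomplete l r Hl Hlr Ha Hb
               k hk0 hk x t Ux htp hm y v Hv Hyv Vy).
    - subst t. pose proof HY as [dYp [dY0 _]]. pose proof HX as [_ [dX0 _]].
      assert (y = v) by (apply dY0; pose proof (dYp y v); lra). subst y.
      exists x. split; auto. replace (dX x x) with 0 by (symmetry; apply dX0; auto). lra. }
  split.
  - exists ((r - l) / 2). apply Hk; lra.
  - right. intros c' Hc'. exists ((Rmax c' 0 + (r - l)) / 2).
    assert (Rmax c' 0 < r - l) by (apply Rmax_lub_lt; lra).
    pose proof (Rmax_l c' 0). pose proof (Rmax_r c' 0).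
    split; [lra|]. apply Hk; lra.
Qed.
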